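(* Let $X$ be a finite $T_0$ topological space and $\mathcal V$ a multivector field on $X$ with $X$ invariant. Let $S_1,S_2\subset X$ be isolated invariant sets. There exists a link $\gamma$ from $S_1$ to $S_2$ if and only if there exists a path $\rho:[a,b]\cap\mathbb Z\to X$ with $\rho(a)\in S_1$ and $\rho(b)\in S_2$.
   Context: Notation: $\operatorname{cl}$ is closure; $A\subset X$ is locally closed if $\operatorname{cl}A\setminus A$ is closed. A multivector field $\mathcal V$ on $X$ is a partition of $X$ into locally closed sets (multivectors); $[x]_{\mathcal V}$ is the multivector containing $x$. A multivector $V$ is critical if $H(\operatorname{cl}V,\operatorname{cl}V\setminus V)$ (relative singular homology) is nontrivial, regular otherwise. $A$ is $\mathcal V$-compatible if it is a union of multivectors; $\langle A\rangle_{\mathcal V}$ is the smallest locally closed $\mathcal V$-compatible set containing $A$. $\Pi_{\mathcal V}(x)=\operatorname{cl}\{x\}\cup[x]_{\mathcal V}$. A solution is a partial map $\gamma:\mathbb Z\nrightarrow X$ with domain an integer interval and $\gamma(t+1)\in\Pi_{\mathcal V}(\gamma(t))$ whenever $t,t+1\in\operatorname{dom}\gamma$; a path is a solution with finite domain; a full solution has domain $\mathbb Z$. $\alpha(\gamma)=\langle\bigcap_{t\le0}\gamma((-\infty,t])\rangle_{\mathcal V}$, $\omega(\gamma)=\langle\bigcap_{t\ge0}\gamma([t,\infty))\rangle_{\mathcal V}$. A full solution is essential unless $\alpha(\gamma)$ or $\omega(\gamma)$ lies in a single regular multivector. $\operatorname{Inv}S$ is the set of $x\in S$ with an essential solution $\gamma$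 with image in $S$ and $\gamma(0)=x$; $S$ is invariant if $\operatorname{Inv}S=S$. An invariant $S$ is isolated invariant if there is a closed $N\supset\Pi_{\mathcal V}(S)$ such that every path in $N$ with endpoints in $S$ has image in $S$. A link from $S_1$ to $S_2$ is a full solution $\gamma$ with $\alpha(\gamma)\cap S_1\ne\emptyset\ne\omega(\gamma)\cap S_2$. *)

(* Defs.v *)
From mathcomp Require Import all_boot all_order all_algebra.
From mathcomp Require Import all_classical all_reals all_analysis.
From mathcomp Require Import Rstruct Rstruct_topology.

Set Implicit Arguments.
Unset Strict Implicit.
Unset Printing Implicit Defensive.

Import Order.TTheory GRing.Theory Num.Theory.
Local Open Scope classical_set_scope.
Local Open Scope ring_scope.

(* Relative singular homology (integer coefficients) of a pair of subsets    *)
(* (Y, A), A ⊆ Y ⊆ X, of a topological space X, each carrying the subspace   *)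
(* topology.  A singular n-simplex in Y is a map from the standard n-simplex *)
(* Δ^n ⊂ R^{n+1} (a row vector of reals) to X which is continuous on Δ^n     *)
(* and maps Δ^n into Y; two such maps are identified when they agree on Δ^n. *)

Notation RR := Rdefinitions.R.

Definition std_simplex (n : nat) : set 'rV[RR]_n.+1 :=
  [set t | (forall i, 0 <= t ord0 i) /\ \sum_(i < n.+1) t ord0 i = 1].
Arguments std_simplex : clear implicits.

Definition simp (X : Type) (n : nat) := 'rV[RR]_n.+1 -> X.

Definition singular_in (X : topologicalType) (Y : set X) (n : nat)
  (s : simp X n) : Prop :=
  {within std_simplex n, continuous s} /\ (forall t, std_simplex n t -> Y (s t)).

Definition simp_eq (X : Type) (n : nat) (s s' : simp X n) : Prop :=
  forall t, std_simplex n t -> s t = s' t.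

Definition chain (X : Type) (n : nat) := seq (int * simp X n).

Definition chain_in (X : topologicalType) (Y : set X) (n : nat)
  (c : chain X n) : Prop :=
  forall k s, List.In (k, s) c -> singular_in Y s.

Definition coef (X : Type) (n : nat) (c : chain X n) (s : simp X n) : int :=
  \sum_(p <- c | `[< simp_eq p.2 s >]) p.1.

(* the i-th face map Δ^n -> Δ^(n+1) (insert a 0 coordinate at position i) *)
Definition face (n : nat) (i : 'I_n.+2) (t : 'rV[RR]_n.+1) : 'rV[RR]_n.+2 :=
  \row_(j < n.+2) (match unlift i j with Some k => t ord0 k | None => 0 end).

Definition bd (X : Type) (n : nat) (c : chain X n.+1) : chain X n :=
  flatten [seq [seq (((-1) ^+ i * p.1)%R, (fun t => p.2 (face i t)))
               | i : 'I_n.+2 <- enum 'I_n.+2] | p <- c].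

Definition rel_cycle (X : topologicalType) (Y A : set X) (n : nat) :
  chain X n -> Prop :=
  match n return chain X n -> Prop with
  | 0 => fun c => chain_in Y c
  | m.+1 => fun c => chain_in Y c /\
      forall s : simp X m, coef (bd c) s != 0 ->
        forall t, std_simplex m t -> A (s t)
  end.

Definition rel_boundary (X : topologicalType) (Y A : set X) (n : nat)
  (c : chain X n) : Prop :=
  exists (d : chain X n.+1) (a : chain X n),
    [/\ chain_in Y d, chain_in A a &
        forall s, coef c s = coef (bd d) s + coef a s].

Definition rel_homology_nontrivial_at (X : topologicalType) (Y A : set X)
  (n : nat) : Prop :=
  exists c : chain X n, rel_cycle Y A c /\ ~ rel_boundary Y A c.

Definition rel_homology_nontrivial (X : topologicalType) (Y A : set X) :=
  exists n, rel_homology_nontrivial_at Y A n.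

Section MV.
Variable X : topologicalType.

Definition locally_closed (A : set X) : Prop := closed (closure A `\` A).

Definition multivector_field (V : set (set X)) : Prop :=
  [/\ forall W, V W -> W !=set0,
      forall W, V W -> locally_closed W,
      forall x : X, exists W, V W /\ W x &
      forall W W', V W -> V W' -> W `&` W' !=set0 -> W = W'].

Definition mv_of (V : set (set X)) (x : X) : set X :=
  [set y | exists W, [/\ V W, W x & W y]].

Definition critical (V : set (set X)) (W : set X) : Prop :=
  rel_homology_nontrivial (closure W) (closure W `\` W).

Definition regular (V : set (set X)) (W : set X) : Prop := ~ critical V W.

Definition compatible (V : set (set X)) (A : set X) : Prop :=
  forall x, A x -> mv_of V x `<=` A.

Definition lc_hull (V : set (set X)) (A : set X) : set X :=
  \bigcap_(B in [set B | [/\ locally_closed B, compatible V B & A `<=` B]]) B.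

Definition Pi (V : set (set X)) (x : X) : set X := closure [set x] `|` mv_of V x.

Definition Pi_set (V : set (set X)) (S : set X) : set X :=
  \bigcup_(x in S) Pi V x.

Definition full_solution (V : set (set X)) (g : int -> X) : Prop :=
  forall t : int, Pi V (g t) (g (t + 1)).

Definition path_sol (V : set (set X)) (a b : int) (r : int -> X) : Prop :=
  a <= b /\ forall t : int, a <= t -> t < b -> Pi V (r t) (r (t + 1)).

Definition alpha_limit (V : set (set X)) (g : int -> X) : set X :=
  lc_hull V [set x | forall t : int, t <= 0 -> exists s, s <= t /\ g s = x].

Definition omega_limit (V : set (set X)) (g : int -> X) : set X :=
  lc_hull V [set x | forall t : int, 0 <= t -> exists s, t <= s /\ g s = x].

Definition essential (V : set (set X)) (g : int -> X) : Prop :=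
  full_solution V g /\
  ~ (exists W, [/\ V W, regular V W & alpha_limit V g `<=` W]) /\
  ~ (exists W, [/\ V W, regular V W & omega_limit V g `<=` W]).

Definition Inv (V : set (set X)) (S : set X) : set X :=
  [set x | S x /\ exists g, [/\ essential V g, (forall t, S (g t)) & g 0 = x]].

Definition invariant_set (V : set (set X)) (S : set X) : Prop := Inv V S = S.

Definition isolated_invariant (V : set (set X)) (S : set X) : Prop :=
  invariant_set V S /\
  exists N : set X, [/\ closed N, Pi_set V S `<=` N &
    forall a b r, path_sol V a b r -> (forall t, a <= t <= b -> N (r t)) ->
      S (r a) -> S (r b) -> forall t, a <= t <= b -> S (r t)].

Definition link (V : set (set X)) (S1 S2 : set X) (g : int -> X) : Prop :=
  full_solution V g /\ alpha_limit V g `&` S1 !=set0 /\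
  omega_limit V g `&` S2 !=set0.

End MV.

(* Main.v *)
Require Import Defs.
From mathcomp Require Import all_boot all_order all_algebra.
From mathcomp Require Import all_classical all_reals all_analysis.
From mathcomp Require Import zify.
From Stdlib Require Import Relations.

Local Open Scope classical_set_scope.
Local Open Scope ring_scope.
Import Order.TTheory GRing.Theory Num.Theory.
Lemma closure_seq (X : topologicalType) (s : seq X) (x : X) :
  closure [set` s] x -> exists d, d \in s /\ closure [set d] x.
Proof.
elim: s => [|a s IH] /=.
  have -> : [set` [::]] = (set0 : set X) by apply/seteqP; split => y.
  by move/closed0.
have -> : [set` (a :: s)] = [set a] `|` [set` s].
  apply/seteqP; split => y /=; rewrite inE.
    by case/orP => [/eqP ->|]; [left|right].
  by case => [->|->]; rewrite ?eqxx ?orbT.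
rewrite closureU => -[H|/IH [d [ds H]]].
  by exists a; rewrite inE eqxx.
by exists d; rewrite inE ds orbT.
Qed.
Section S.
Variables (X : topologicalType) (V : set (set X)).

Definition reach := clos_refl_trans X (Pi V).

Lemma Pi_refl x : Pi V x x.
Proof. by left; apply: subset_closure. Qed.

Lemma snoc a b r y : path_sol V a b r -> Pi V (r b) y ->
  exists r', path_sol V a (b+1) r' /\ r' a = r a /\ r' (b+1) = y.
Proof.
move=> [ab Hr] Hy.
exists (fun t => if t <= b then r t else y); split; [split|].
- lia.
- move=> t ta tb.
  case: (Order.TotalTheory.ltP t b) => tb'.
  + rewrite (Order.POrderTheory.ltW tb').
    have -> : (t + 1 <= b) = true by lia.
    exact: Hr.
  + have -> : (t <= b) = true by lia.
    have -> : (t + 1 <= b) = false by lia.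
    have -> : t = b by lia.
    exact: Hy.
- rewrite ab; split => //.
  by have -> : (b + 1 <= b) = false by lia.
Qed.

Lemma reach_path x y : reach x y ->
  exists a b r, path_sol V a b r /\ r a = x /\ r b = y.
Proof.
move=> H; have {H} := clos_rt_rtn1 _ _ _ _ H; elim => [|y' z Hyz _ [a [b [r [Hp [ra rb]]]]]].
  by exists 0, 0, (fun _ => x); split => //; split => // t; lia.
have [r' [Hp' [r'a r'b]]] := snoc _ _ _ _ Hp (eq_ind_r (fun u => Pi V u z) Hyz rb).
by exists a, (b+1), r'; rewrite r'a.
Qed.

Lemma sol_reach g s : full_solution V g -> forall n : nat, reach (g s) (g (s + n%:Z)).
Proof.
move=> Hg; elim => [|n IH]; first by rewrite addr0; apply: rt_refl.
apply: rt_trans IH _; apply: rt_step.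
have -> : s + n.+1%:Z = (s + n%:Z) + 1 by lia.
exact: Hg.
Qed.

Lemma sol_reach_le g s s' : full_solution V g -> s <= s' -> reach (g s) (g s').
Proof.
move=> Hg le; have := @sol_reach g s Hg `|s' - s|%N.
have -> // : s + `|s' - s|%N%:Z = s'.
rewrite gez0_abs; first by lia.
lia.
Qed.

End S.
Arguments reach {X}.
Arguments Pi_refl {X V}.
Arguments reach_path {X V x y}.
Arguments sol_reach_le {X V g s s'}.
Lemma closure_fin (X : topologicalType) (Xfin : finite_set [set: X]) (D : set X) z :
  closure D z -> exists d, D d /\ closure [set d] z.
Proof.
have /finite_seqP [s Ds] : finite_set D by apply: sub_finite_set Xfin.
rewrite Ds => /closure_seq [d [ds H]]; exists d; split => //.
Qed.

Theorem proposition4p2 (X : topologicalType)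
  (Xfin : finite_set [set: X]) (XT0 : @kolmogorov_space X)
  (V : set (set X)) (HV : multivector_field V)
  (Xinv : invariant_set V [set: X])
  (S1 S2 : set X)
  (HS1 : isolated_invariant V S1) (HS2 : isolated_invariant V S2) :
  (exists g : int -> X, link V S1 S2 g) <->
  (exists (a b : int) (r : int -> X),
      path_sol V a b r /\ S1 (r a) /\ S2 (r b)).
Proof.
split.
- move=> [g [Hg [[p [Hpa Hp1]] [q [Hqo Hq2]]]]].
  set La := [set x | forall t : int, t <= 0 -> exists s, s <= t /\ g s = x].
  set Lo := [set x | forall t : int, 0 <= t -> exists s, t <= s /\ g s = x].
  set Ba := [set x | exists u, La u /\ reach V x u].
  set Bo := [set x | exists v, Lo v /\ reach V v x].
  have Ca : closed (~` Ba).
    move=> z /(@closure_fin X Xfin _ _) [d [Cd Hdz]] Bz; apply: Cd.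
    case: Bz => u [Lu Hzu]; exists u; split => //.
    by apply: rt_trans Hzu; apply: rt_step; left.
  have Co : closure Bo `<=` Bo.
    move=> z /(@closure_fin X Xfin _ _) [d [[v [Lv Hvd]] Hdz]].
    by exists v; split => //; apply: rt_trans Hvd _; apply: rt_step; left.
  have pBa : Ba p.
    apply: Hpa; split.
    + rewrite /locally_closed setDE; apply: closedI => //; exact: closed_closure.
    + move=> x [u [Lu Hxu]] y [W [VW Wx Wy]]; exists u; split => //.
      by apply: rt_trans Hxu; apply: rt_step; right; exists W.
    + by move=> u Lu; exists u; split => //; apply: rt_refl.
  have qBo : Bo q.
    apply: Hqo; split.
    + rewrite /locally_closed.
      have -> : closure Bo `\` Bo = set0.
        by apply/seteqP; split => x // [/Co].
      exact: closed0.
    + move=> x [v [Lv Hvx]] y [W [VW Wx Wy]]; exists v; split => //.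
      by apply: rt_trans Hvx _; apply: rt_step; right; exists W.
    + by move=> u Lu; exists u; split => //; apply: rt_refl.
  case: pBa => u [/(_ 0 (lexx _)) [s1 [s10 <-]] Hpu].
  case: qBo => v [/(_ 0 (lexx _)) [s2 [s20 <-]] Hvq].
  have Hpq : reach V p q.
    apply: rt_trans Hpu _; apply: rt_trans _ Hvq.
    apply: sol_reach_le => //; exact: le_trans s10 s20.
  have [a [b [r [Hr [ra rb]]]]] := reach_path Hpq.
  by exists a, b, r; rewrite ra rb.
- move=> [a [b [r [[ab Hr] [Sa Sb]]]]].
  exists (fun t => if t <= a then r a else if b <= t then r b else r t).
  split; [|split].
  + move=> t /=.
    case: (leP t a) => ta.
      case: (leP (t + 1) a) => ta1; first exact: Pi_refl.
      have et : t = a by lia.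
      case: (leP b (t + 1)) => bt.
        case: (eqVneq a b) => [eab|nab]; first by rewrite -eab; exact: Pi_refl.
        have -> : b = a + 1 by lia.
        apply: (Hr a); lia.
      rewrite -[in r a]et; apply: Hr; lia.
    case: (leP b t) => bt.
      have -> : (t + 1 <= a) = false by lia.
      have -> : (b <= t + 1) = true by lia.
      exact: Pi_refl.
    have -> : (t + 1 <= a) = false by lia.
    case: (leP b (t + 1)) => bt1.
      have -> : b = t + 1 by lia.
      apply: Hr; lia.
    apply: Hr; lia.
  + exists (r a); split => //; move=> B /= [_ _ HB]; apply: HB => t t0.
    case: (leP t a) => ta.
      by exists t; split => //; rewrite ta.
    by exists a; split; [lia| rewrite lexx].
  + exists (r b); split => //; move=> B /= [_ _ HB]; apply: HB => t t0.
    exists (t + `|a| + `|b| + 1); split.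
      have := normr_ge0 a; have := normr_ge0 b; lia.
    have -> : (t + `|a| + `|b| + 1 <= a) = false.
      have := ler_norm a; have := normr_ge0 b; lia.
    have -> : (b <= t + `|a| + `|b| + 1) = true.
      have := ler_norm b; have := normr_ge0 a; lia.
    by [].
Qed.
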